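(* Let $a,b\in\mathbb{Z}_{<0}$. Expand $q^{\frac12b}E_{(a,b)}X_1-E_{(a+1,b)}$ as a $\mathbb{Z}[q^{\pm\frac12}]$-linear combination of standard monomials. Then every standard monomial $E_{(c,d)}$ occurring with nonzero coefficient satisfies $c\le a-b+1$ if $d\ge0$, and $c-d\le a-b+1$ if $d<0$.
   Context: Let $\mathcal{T}$ be the quantum torus over $\mathbb{Z}[q^{\pm\frac12}]$ generated by $X_1^{\pm1},X_2^{\pm1}$ with $X_1X_2=qX_2X_1$, with skew field of fractions $\mathcal{F}$. Define $X_k\in\mathcal{F}$ ($k\in\mathbb{Z}$) by $X_{k-1}X_{k+1}=q^{\frac12}X_k+1$ for $k$ odd and $X_{k-1}X_{k+1}=q^2X_k^4+1$ for $k$ even; $\mathcal{A}_q(1,4)$ is the $\mathbb{Z}[q^{\pm\frac12}]$-subalgebra of $\mathcal{F}$ generated by all $X_k$. For $x\in\mathbb{Z}$, $[x]_+=\max(x,0)$. Standard monomials: $E_{(a,b)}=q^{-\frac12ab}X_3^{[-a]_+}X_1^{[a]_+}X_2^{[b]_+}X_0^{[-b]_+}$ for $(a,b)\in\mathbb{Z}^2$; they form a $\mathbb{Z}[q^{\pm\frac12}]$-basis of $\mathcal{A}_q(1,4)$. *)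

(* Defs.v *)
From Stdlib Require Import ZArith List.
Import ListNotations.
Open Scope Z_scope.

(* Write t := q^{1/2}.  T is the free Z-module with basis t^n X1^a X2^b
   (n, a, b : Z), with t central and X1 X2 = q X2 X1 = t^2 X2 X1.
   An element of T is represented by a finite formal sum: a list of terms
   (k, n, a, b) standing for k * t^n * X1^a * X2^b.  Two lists represent the
   same element iff they have the same coefficient function [coef]. *)
Definition term := (Z * Z * Z * Z)%type.
Definition qt := list term.

Definition coef (s : list term) (n a b : Z) : Z :=
  fold_right (fun x acc =>
    let '(k, n', a', b') := x in
    if (Z.eqb n n' && Z.eqb a a' && Z.eqb b b')%bool then k + acc else acc) 0 s.

Definition qt_eq (s1 s2 : qt) : Prop :=
  forall n a b : Z, coef s1 n a b = coef s2 n a b.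

(* (t^n X1^a X2^b)(t^n' X1^a' X2^b') = t^(n+n'-2ba') X1^(a+a') X2^(b+b'),
   since X2^b X1^a' = q^(-b a') X1^a' X2^b. *)
Definition term_mul (x y : term) : term :=
  let '(k, n, a, b) := x in
  let '(k', n', a', b') := y in
  (k * k', n + n' - 2 * b * a', a + a', b + b').

Definition qt_mul (s1 s2 : qt) : qt := flat_map (fun x => map (term_mul x) s2) s1.
Definition qt_add (s1 s2 : qt) : qt := s1 ++ s2.
Definition qt_scale (k n : Z) (s : qt) : qt := map (term_mul (k, n, 0, 0)) s.
Definition qt_one : qt := [(1, 0, 0, 0)].
Fixpoint qt_pow (s : qt) (m : nat) : qt :=
  match m with O => qt_one | S m' => qt_mul s (qt_pow s m') end.

Definition X1 : qt := [(1, 0, 1, 0)].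
Definition X2 : qt := [(1, 0, 0, 1)].
Definition X1inv : qt := [(1, 0, -1, 0)].
Definition X2inv : qt := [(1, 0, 0, -1)].

(* From X_0 X_2 = q^{1/2} X_1 + 1 (k = 1 odd):  X_0 = (q^{1/2} X_1 + 1) X_2^{-1} *)
Definition X0 : qt := qt_mul (qt_add [(1, 1, 1, 0)] qt_one) X2inv.
(* From X_1 X_3 = q^2 X_2^4 + 1 (k = 2 even):  X_3 = X_1^{-1} (q^2 X_2^4 + 1) *)
Definition X3 : qt := qt_mul X1inv (qt_add [(1, 4, 0, 4)] qt_one).

Definition posp (x : Z) : nat := Z.to_nat (Z.max x 0).

Definition E (a b : Z) : qt :=
  qt_scale 1 (- (a * b))
    (qt_mul (qt_mul (qt_mul (qt_pow X3 (posp (- a))) (qt_pow X1 (posp a)))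
                    (qt_pow X2 (posp b)))
            (qt_pow X0 (posp (- b)))).

(* A Z[q^{±1/2}]-linear combination of standard monomials, given as a list of
   entries (k, n, c, d) meaning k * t^n * E_(c,d).  The coefficient of E_(c,d)
   is the Laurent polynomial sum_n (coef l n c d) t^n. *)
Definition expand (l : list term) : qt :=
  flat_map (fun x => let '(k, n, c, d) := x in qt_scale k n (E c d)) l.

Definition occurs (l : list term) (c d : Z) : Prop :=
  exists n : Z, coef l n c d <> 0.

Definition target (a b : Z) : qt :=
  qt_add (qt_scale 1 b (qt_mul (E a b) X1)) (qt_scale (-1) 0 (E (a + 1) b)).

(* Main.v *)
Require Import Defs.
From Stdlib Require Import ZArith List Lia.
Import ListNotations.
Open Scope Z_scope.

Lemma coef_nil n a b : coef [] n a b = 0.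
Proof. reflexivity. Qed.

Lemma coef_cons k n' a' b' s n a b :
  coef ((k,n',a',b') :: s) n a b =
  (if (Z.eqb n n' && Z.eqb a a' && Z.eqb b b')%bool then k else 0) + coef s n a b.
Proof. simpl. destruct (_ && _ && _)%bool; lia. Qed.

Lemma coef_app s1 s2 n a b : coef (s1 ++ s2) n a b = coef s1 n a b + coef s2 n a b.
Proof.
  induction s1 as [|[[[k n'] a'] b'] s IH]; [simpl; lia|].
  cbn [app]. rewrite !coef_cons, IH. lia.
Qed.

Lemma coef_nz_in s n a b : coef s n a b <> 0 -> exists k, In (k,n,a,b) s.
Proof.
  induction s as [|[[[k n'] a'] b'] s IH]; [simpl; lia|].
  intro H. rewrite coef_cons in H.
  destruct (Z.eqb_spec n n'); destruct (Z.eqb_spec a a'); destruct (Z.eqb_spec b b'); simpl in H;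
  try (subst; exists k; left; reflexivity);
  destruct IH as [k0 Hk]; try lia; exists k0; simpl; right; exact Hk.
Qed.

Lemma coef_map_mul k n0 a0 b0 s n X Y :
  coef (map (term_mul (k,n0,a0,b0)) s) n X Y
  = k * coef s (n - n0 + 2*b0*(X-a0)) (X-a0) (Y-b0).
Proof.
  induction s as [|[[[k' n'] a'] b'] s IH]; [simpl; lia|]. cbn [map].
  unfold term_mul at 1. rewrite !coef_cons, IH.
  destruct (Z.eqb_spec n (n0 + n' - 2 * b0 * a')); destruct (Z.eqb_spec X (a0+a')); destruct (Z.eqb_spec Y (b0+b'));
  destruct (Z.eqb_spec (n - n0 + 2*b0*(X-a0)) n'); destruct (Z.eqb_spec (X-a0) a'); destruct (Z.eqb_spec (Y-b0) b'); simpl;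
  try lia; subst; nia.
Qed.

Definition msum (s1 s2 : qt) (n X Y : Z) : Z :=
  fold_right (fun x acc => (let '(k,n0,a0,b0) := x in
     k * coef s2 (n - n0 + 2*b0*(X-a0)) (X-a0) (Y-b0)) + acc) 0 s1.

Lemma coef_mul s1 s2 n X Y : coef (qt_mul s1 s2) n X Y = msum s1 s2 n X Y.
Proof.
  induction s1 as [|[[[k n'] a'] b'] s IH]; [reflexivity|].
  unfold qt_mul in *; simpl flat_map. rewrite coef_app, IH, coef_map_mul. reflexivity.
Qed.

Lemma coef_scale k n0 s n X Y : coef (qt_scale k n0 s) n X Y = k * coef s (n - n0) X Y.
Proof.
  unfold qt_scale. rewrite coef_map_mul.
  replace (n - n0 + 2*0*(X-0)) with (n-n0) by lia. rewrite !Z.sub_0_r. reflexivity.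
Qed.

Definition lexle (x y X Y : Z) : Prop := x < X \/ (x = X /\ Y <= y).
Definition bnd (s : qt) X Y := forall k n x y, In (k,n,x,y) s -> lexle x y X Y.
Definition lead (s : qt) X Y m := bnd s X Y /\ forall n, coef s n X Y = if Z.eqb n m then 1 else 0.
Definition leadE (s : qt) X Y := exists m, lead s X Y m.

Lemma bnd_coef s X Y n x y : bnd s X Y -> coef s n x y <> 0 -> lexle x y X Y.
Proof. intros H Hc. destruct (coef_nz_in _ _ _ _ Hc) as [k Hk]. exact (H _ _ _ _ Hk). Qed.

Lemma bnd_coef0 s X Y n x y : bnd s X Y -> ~ lexle x y X Y -> coef s n x y = 0.
Proof. intros H Hn. destruct (Z.eq_dec (coef s n x y) 0); auto. exfalso; apply Hn; eapply bnd_coef; eauto. Qed.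

Lemma bnd_mul s1 s2 X1 Y1 X2 Y2 : bnd s1 X1 Y1 -> bnd s2 X2 Y2 -> bnd (qt_mul s1 s2) (X1+X2) (Y1+Y2).
Proof.
  intros H1 H2 k n x y Hin. unfold qt_mul in Hin. apply in_flat_map in Hin.
  destruct Hin as [[[[k1 n1] a1] b1] [Hi1 Hin]]. apply in_map_iff in Hin.
  destruct Hin as [[[[k2 n2] a2] b2] [He Hi2]]. simpl in He. inversion He; subst.
  specialize (H1 _ _ _ _ Hi1). specialize (H2 _ _ _ _ Hi2). unfold lexle in *. lia.
Qed.

Lemma bnd_app s1 s2 X Y : bnd s1 X Y -> bnd s2 X Y -> bnd (qt_add s1 s2) X Y.
Proof. intros H1 H2 k n x y Hin. apply in_app_or in Hin. destruct Hin; eauto. Qed.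

Lemma bnd_scale k0 n0 s X Y : bnd s X Y -> bnd (qt_scale k0 n0 s) X Y.
Proof.
  intros H k n x y Hin. unfold qt_scale in Hin. apply in_map_iff in Hin.
  destruct Hin as [[[[k2 n2] a2] b2] [He Hi2]]. simpl in He. inversion He; subst.
  specialize (H _ _ _ _ Hi2). unfold lexle in *. lia.
Qed.

Lemma bnd_eq s X Y X' Y' : bnd s X Y -> X = X' -> Y = Y' -> bnd s X' Y'.
Proof. intros; subst; auto. Qed.

Lemma msum_sel s1 s2 n X Y N X1 Y1 :
  (forall k n0 a0 b0, In (k,n0,a0,b0) s1 ->
     k * coef s2 (n - n0 + 2*b0*(X-a0)) (X-a0) (Y-b0)
     = if (Z.eqb N n0 && Z.eqb X1 a0 && Z.eqb Y1 b0)%bool then k else 0) ->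
  msum s1 s2 n X Y = coef s1 N X1 Y1.
Proof.
  induction s1 as [|[[[k n'] a'] b'] s IH]; intros H; [reflexivity|].
  rewrite coef_cons. unfold msum; cbn [fold_right]. fold (msum s s2 n X Y). rewrite H by (left; reflexivity). f_equal.
  apply IH. intros; apply H; right; auto.
Qed.

Lemma lead_mul s1 s2 X1 Y1 X2 Y2 m1 m2 : lead s1 X1 Y1 m1 -> lead s2 X2 Y2 m2 ->
  lead (qt_mul s1 s2) (X1+X2) (Y1+Y2) (m1 + m2 - 2*Y1*X2).
Proof.
  intros [B1 C1] [B2 C2]. split; [apply bnd_mul; auto|].
  intro n. rewrite coef_mul.
  rewrite (msum_sel _ _ _ _ _ (n + 2*Y1*X2 - m2) X1 Y1).
  - rewrite C1. destruct (Z.eqb_spec (n + 2*Y1*X2 - m2) m1); destruct (Z.eqb_spec n (m1 + m2 - 2*Y1*X2)); lia.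
  - intros k n0 a0 b0 Hin. specialize (B1 _ _ _ _ Hin). unfold lexle in B1.
    destruct (Z.eqb_spec X1 a0).
    + destruct (Z.eqb_spec Y1 b0).
      * subst a0 b0. replace (X1 + X2 - X1) with X2 by lia. replace (Y1+Y2-Y1) with Y2 by lia.
        rewrite C2. rewrite Bool.andb_true_r, Bool.andb_true_r.
        destruct (Z.eqb_spec (n - n0 + 2 * Y1 * X2) m2); destruct (Z.eqb_spec (n + 2 * Y1 * X2 - m2) n0); lia.
      * rewrite Bool.andb_false_r. rewrite (bnd_coef0 _ X2 Y2); auto; [lia|]. unfold lexle; lia.
    + rewrite Bool.andb_false_r, Bool.andb_false_l. rewrite (bnd_coef0 _ X2 Y2); auto; [lia|]. unfold lexle; lia.
Qed.

Lemma lead_one : lead qt_one 0 0 0.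
Proof.
  split.
  - intros k n x y [H|[]]. inversion H; subst. unfold lexle; lia.
  - intro n. unfold qt_one. rewrite coef_cons. simpl. destruct (n =? 0); reflexivity.
Qed.

Lemma leadE_pow s X Y k : leadE s X Y -> leadE (qt_pow s k) (Z.of_nat k * X) (Z.of_nat k * Y).
Proof.
  intros [m Hm]. induction k as [|k [m' IH]].
  - exists 0. simpl. exact lead_one.
  - eexists. simpl qt_pow. pose proof (lead_mul _ _ _ _ _ _ _ _ Hm IH) as H.
    replace (Z.of_nat (S k) * X) with (X + Z.of_nat k * X) by lia.
    replace (Z.of_nat (S k) * Y) with (Y + Z.of_nat k * Y) by lia. exact H.
Qed.

Lemma leadE_mul s1 s2 X1 Y1 X2 Y2 : leadE s1 X1 Y1 -> leadE s2 X2 Y2 -> leadE (qt_mul s1 s2) (X1+X2) (Y1+Y2).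
Proof. intros [m1 H1] [m2 H2]. eexists. apply lead_mul; eauto. Qed.

Lemma leadE_scale n0 s X Y : leadE s X Y -> leadE (qt_scale 1 n0 s) X Y.
Proof.
  intros [m [B C]]. exists (m + n0). split; [apply bnd_scale; auto|].
  intro n. rewrite coef_scale, C. destruct (Z.eqb_spec (n - n0) m); destruct (Z.eqb_spec n (m+n0)); lia.
Qed.

Lemma leadE_eq s X Y X' Y' : leadE s X Y -> X = X' -> Y = Y' -> leadE s X' Y'.
Proof. intros; subst; auto. Qed.

Lemma leadE_bnd s X Y : leadE s X Y -> bnd s X Y.
Proof. intros [m [B _]]; auto. Qed.

Lemma lead_X1 : leadE X1 1 0.
Proof.
  exists 0. split.
  - intros k n x y [H|[]]. inversion H; subst. unfold lexle; lia.
  - intro n. unfold X1. rewrite coef_cons. simpl. destruct (n =? 0); reflexivity.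
Qed.

Lemma lead_X2 : leadE X2 0 1.
Proof.
  exists 0. split.
  - intros k n x y [H|[]]. inversion H; subst. unfold lexle; lia.
  - intro n. unfold X2. rewrite coef_cons. simpl. destruct (n =? 0); reflexivity.
Qed.

Lemma lead_X0 : leadE X0 1 (-1).
Proof.
  exists 1. assert (E0 : X0 = [(1,1,1,-1);(1,0,0,-1)]) by reflexivity. rewrite E0. split.
  - intros k n x y [H|[H|[]]]; inversion H; subst; unfold lexle; lia.
  - intro n. rewrite !coef_cons. simpl. destruct (n =? 1); destruct (n =? 0); reflexivity.
Qed.

Lemma lead_X3 : leadE X3 (-1) 0.
Proof.
  exists 0. assert (E0 : X3 = [(1,4,-1,4);(1,0,-1,0)]) by reflexivity. rewrite E0. split.
  - intros k n x y [H|[H|[]]]; inversion H; subst; unfold lexle; lia.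
  - intro n. rewrite !coef_cons. simpl. destruct (n =? 4); destruct (n =? 0); reflexivity.
Qed.

Definition phi (c d : Z) := c + Z.max (-d) 0.

Lemma lead_E c d : leadE (E c d) (phi c d) d.
Proof.
  unfold E. apply leadE_scale.
  eapply leadE_eq.
  - apply leadE_mul; [apply leadE_mul; [apply leadE_mul|]|]; apply leadE_pow;
      [apply lead_X3|apply lead_X1|apply lead_X2|apply lead_X0].
  - unfold phi, posp. rewrite !Z2Nat.id by lia. lia.
  - unfold posp. rewrite !Z2Nat.id by lia. lia.
Qed.

Definition sumk (l : list term) (h : Z -> Z -> Z -> Z) : Z :=
  fold_right (fun e acc => (let '(k,n,c,d) := e in k * h n c d) + acc) 0 l.

Lemma coef_expand l N X Y :
  coef (expand l) N X Y = sumk l (fun n c d => coef (E c d) (N - n) X Y).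
Proof.
  induction l as [|[[[k n] c] d] l IH]; [reflexivity|].
  unfold expand in *. simpl flat_map. rewrite coef_app, IH, coef_scale. reflexivity.
Qed.

Lemma sumk_add l h1 h2 : sumk l (fun n c d => h1 n c d + h2 n c d) = sumk l h1 + sumk l h2.
Proof. induction l as [|[[[k n] c] d] l IH]; simpl; [lia|]. rewrite IH. lia. Qed.

Lemma sumk_ext l h1 h2 : (forall n c d, h1 n c d = h2 n c d) -> sumk l h1 = sumk l h2.
Proof. intro H. induction l as [|[[[k n] c] d] l IH]; simpl; [lia|]. rewrite IH, H. lia. Qed.

Lemma sumk_sel l n0 c0 d0 :
  sumk l (fun n c d => if (Z.eqb n0 n && Z.eqb c0 c && Z.eqb d0 d)%bool then 1 else 0) = coef l n0 c0 d0.
Proof.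
  induction l as [|[[[k n] c] d] l IH]; [reflexivity|].
  rewrite coef_cons, <- IH. simpl. destruct (_ && _ && _)%bool; lia.
Qed.

Definition notkey n0 c0 d0 (e : term) : bool :=
  let '(_,n,c,d) := e in negb (Z.eqb n0 n && Z.eqb c0 c && Z.eqb d0 d)%bool.

Lemma sumk_filter l h n0 c0 d0 :
  sumk l h = sumk (filter (notkey n0 c0 d0) l) h + coef l n0 c0 d0 * h n0 c0 d0.
Proof.
  induction l as [|[[[k n] c] d] l IH]; [simpl; lia|].
  rewrite coef_cons. simpl filter. unfold notkey at 1.
  destruct (Z.eqb_spec n0 n); destruct (Z.eqb_spec c0 c); destruct (Z.eqb_spec d0 d); simpl;
  fold (notkey n0 c0 d0); rewrite IH; subst; try lia; nia.
Qed.

Lemma coef_filter l n0 c0 d0 n c d :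
  coef (filter (notkey n0 c0 d0) l) n c d =
  if (Z.eqb n0 n && Z.eqb c0 c && Z.eqb d0 d)%bool then 0 else coef l n c d.
Proof.
  induction l as [|[[[k n'] c'] d'] l IH].
  - simpl. destruct (_ && _ && _)%bool; reflexivity.
  - rewrite coef_cons. simpl filter. unfold notkey at 1.
    destruct (Z.eqb_spec n0 n'); destruct (Z.eqb_spec c0 c'); destruct (Z.eqb_spec d0 d'); simpl;
    fold (notkey n0 c0 d0); try rewrite coef_cons; rewrite IH;
    destruct (Z.eqb_spec n0 n); destruct (Z.eqb_spec c0 c); destruct (Z.eqb_spec d0 d);
    destruct (Z.eqb_spec n n'); destruct (Z.eqb_spec c c'); destruct (Z.eqb_spec d d'); simpl; lia.
Qed.

Lemma filter_len {T} (f : T -> bool) l : (length (filter f l) <= length l)%nat.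
Proof. induction l; simpl; [lia|]. destruct (f a); simpl; lia. Qed.

Lemma sumk_vanish h : forall len l, (length l <= len)%nat ->
  (forall n c d, coef l n c d = 0 \/ h n c d = 0) -> sumk l h = 0.
Proof.
  induction len as [|len IH]; intros l Hl Hv.
  - destruct l; [reflexivity|simpl in Hl; lia].
  - destruct l as [|[[[k n0] c0] d0] t]; [reflexivity|].
    rewrite (sumk_filter _ h n0 c0 d0).
    rewrite IH.
    + destruct (Hv n0 c0 d0) as [H|H]; rewrite H; lia.
    + simpl filter. unfold notkey at 1. rewrite !Z.eqb_refl. simpl.
      pose proof (filter_len (notkey n0 c0 d0) t). simpl in Hl. lia.
    + intros n c d. rewrite coef_filter. destruct (_ && _ && _)%bool; auto.
Qed.

Lemma best_exists (L : list term) :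
  L = [] \/ exists e, In e L /\ forall e', In e' L ->
    let '(_,_,c,d) := e in let '(_,_,c',d') := e' in lexle (phi c' d') d' (phi c d) d.
Proof.
  induction L as [|x L IH]; [left; auto|right].
  destruct IH as [->|[e [He Hb]]].
  - exists x. split; [left; auto|]. intros e' [<-|[]]. destruct x as [[[k n] c] d]. unfold lexle; lia.
  - destruct x as [[[k n] c] d]. destruct e as [[[k1 n1] c1] d1].
    destruct (Z_lt_le_dec (phi c d) (phi c1 d1)) as [Hlt|Hle].
    + exists (k1,n1,c1,d1). split; [right; auto|]. intros e' [<-|Hi]; [unfold lexle; lia|].
      apply Hb; auto.
    + destruct (Z.eq_dec (phi c d) (phi c1 d1)) as [Heq|Hne].
      * destruct (Z_le_dec d d1).
        -- exists (k,n,c,d). split; [left; auto|]. intros e' [<-|Hi]; [unfold lexle; lia|].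
           specialize (Hb e' Hi). destruct e' as [[[k' n'] c'] d']. unfold lexle in *; lia.
        -- exists (k1,n1,c1,d1). split; [right; auto|]. intros e' [<-|Hi]; [unfold lexle; lia|].
           apply Hb; auto.
      * exists (k,n,c,d). split; [left; auto|]. intros e' [<-|Hi]; [unfold lexle; lia|].
        specialize (Hb e' Hi). destruct e' as [[[k' n'] c'] d']. unfold lexle in *; lia.
Qed.

Lemma bnd_target a b : b < 0 -> bnd (target a b) (a - b + 1) b.
Proof.
  intro hb. unfold target. apply bnd_app; apply bnd_scale.
  - apply (bnd_eq _ (phi a b + 1) (b + 0)).
    + apply bnd_mul; apply leadE_bnd; [apply lead_E|apply lead_X1].
    + unfold phi; lia.
    + lia.
  - apply (bnd_eq _ (phi (a+1) b) b); [apply leadE_bnd, lead_E| unfold phi; lia | lia].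
Qed.

Theorem lemma4p4 (a b : Z) (ha : a < 0) (hb : b < 0) (l : list term) :
  qt_eq (expand l) (target a b) ->
  forall c d : Z, occurs l c d ->
    (0 <= d -> c <= a - b + 1) /\ (d < 0 -> c - d <= a - b + 1).
Proof.
  intros Heq c d [n0 Hn0].
  set (L := filter (fun e : term => let '(_,n,c,d) := e in negb (Z.eqb (coef l n c d) 0)) l).
  assert (HL : forall k n c d, In (k,n,c,d) L <-> In (k,n,c,d) l /\ coef l n c d <> 0).
  { intros k n c' d'. unfold L. rewrite filter_In.
    destruct (Z.eqb_spec (coef l n c' d') 0); simpl; intuition discriminate. }
  destruct (coef_nz_in _ _ _ _ Hn0) as [k0 Hk0].
  destruct (best_exists L) as [HLn|[[[[ks ns] cs] ds] [Hin Hbest]]].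
  { assert (In (k0,n0,c,d) L) by (apply HL; auto). rewrite HLn in H; destruct H. }
  apply HL in Hin. destruct Hin as [_ Hcs].
  assert (Hmax : forall n c' d', coef l n c' d' <> 0 -> lexle (phi c' d') d' (phi cs ds) ds).
  { intros n c' d' Hc. destruct (coef_nz_in _ _ _ _ Hc) as [k' Hk'].
    exact (Hbest (k',n,c',d') (proj2 (HL _ _ _ _) (conj Hk' Hc))). }
  destruct (lead_E cs ds) as [ms [Bs Cs]].
  set (N := ns + ms).
  assert (Hcoef : coef (expand l) N (phi cs ds) ds = coef l ns cs ds).
  { rewrite coef_expand.
    rewrite (sumk_ext l _ (fun n c' d' =>
       (if (Z.eqb ns n && Z.eqb cs c' && Z.eqb ds d')%bool then 1 else 0) +
       (coef (E c' d') (N - n) (phi cs ds) ds -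
        (if (Z.eqb ns n && Z.eqb cs c' && Z.eqb ds d')%bool then 1 else 0)))) by (intros; lia).
    rewrite sumk_add, sumk_sel, (sumk_vanish _ (length l)); [lia|lia|].
    intros n c' d'. destruct (Z.eq_dec (coef l n c' d') 0) as [Z0|NZ]; [left; auto|right].
    specialize (Hmax _ _ _ NZ).
    destruct (Z.eqb_spec cs c'); destruct (Z.eqb_spec ds d').
    { subst c' d'. rewrite Cs, ?Z.eqb_refl, ?Bool.andb_true_r.
      destruct (Z.eqb_spec (N - n) ms); destruct (Z.eqb_spec ns n); unfold N in *; lia. }
    all: rewrite ?Bool.andb_false_r, ?Bool.andb_false_l;
      rewrite (bnd_coef0 _ (phi c' d') d'); [lia| apply leadE_bnd, lead_E|];
      unfold lexle in *; unfold phi in *; lia. }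
  rewrite Heq in Hcoef.
  assert (Ht := bnd_coef _ _ _ _ _ _ (bnd_target a b hb) (ltac:(rewrite Hcoef; exact Hcs))).
  specialize (Hmax _ _ _ Hn0).
  unfold lexle, phi in *. lia.
Qed.
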